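(* Let $d=\infty$, $C>0$ and ${\boldsymbol\gamma}\in\mathcal M_d$. Then $T^\downarrow_{d,C}{\boldsymbol\gamma}\in\mathcal S_{d,C}$, and for every $u\in\mathcal U_d$ the iterated limit $\lim_{r\to\infty}\lim_{s\to\infty}(\Delta_{[s]\setminus[r]}{\boldsymbol\gamma})_u$ exists and $$\big((T^\uparrow_{d,C}\circ T^\downarrow_{d,C}){\boldsymbol\gamma}\big)_u=\lim_{r\to\infty}\lim_{s\to\infty}(\Delta_{[s]\setminus[r]}{\boldsymbol\gamma})_u\le\gamma_u.$$
   Context: Let $d\in\mathbb N\cup\{\infty\}$. Write $[d]=\{1,\dots,d\}$ if $d\in\mathbb N$ and $[d]=\mathbb N$ if $d=\infty$; for $s\in\mathbb N$, $[s]=\{1,\dots,s\}$. Let $\mathcal U_d$ be the set of all finite subsets of $[d]$. The set of weights is $\mathcal W_d=\{{\boldsymbol\gamma}\in\mathbb R^{\mathcal U_d}:{\boldsymbol\gamma}\ge\mathbf 0\}$ (inequalities componentwise). For $v\in\mathcal U_d$, $(\Delta_v{\boldsymbol\gamma})_u=\sum_{w\subseteq v}(-1)^{|w|}\gamma_{u\cup w}$. $\mathcal M_d$ is the set of weights with $\Delta_v{\boldsymbol\gamma}\ge\mathbf 0$ for all $v\in\mathcal U_d$ (completely monotone weights). For $C>0$, $\mathcal S_{d,C}=\{{\boldsymbol\gamma}\in\mathcal W_d:\sum_{v}C^{2|v|}\gamma_v<\infty\}$, $T^\uparrow_{d,C}\colon\mathcal S_{d,C}\to\mathcal W_d$, $(T^\uparrow_{d,C}{\boldsymbol\gamma})_u=\sum_{v\supseteq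 u}C^{2|v|}\gamma_v$, and for $d=\infty$, $T^\downarrow_{d,C}\colon\mathcal M_d\to\mathcal W_d$, $(T^\downarrow_{d,C}{\boldsymbol\gamma})_u=C^{-2|u|}\lim_{s\to\infty}(\Delta_{[s]\setminus u}{\boldsymbol\gamma})_u$ (the limit exists since the sequence is non-increasing in $[0,\gamma_u]$). *)

(* Defs.v *)
From HB Require Import structures.
From mathcomp Require Import all_boot all_order all_algebra.
From mathcomp Require Import finmap.
From mathcomp Require Import all_classical all_reals all_analysis.
Set Implicit Arguments. Unset Strict Implicit. Unset Printing Implicit Defensive.
Import Order.TTheory GRing.Theory Num.Theory numFieldNormedType.Exports.
Local Open Scope ring_scope.
Local Open Scope fset_scope.

(* Index set [d] = N (d = infinity), relabelled so that coordinate j >= 1 of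
   the paper is the natural number j-1.  Finite subsets of [d] (U_d) are
   elements of {fset nat}. *)
Definition Ud := {fset nat}.

(* [s] = {1,...,s} of the paper, i.e. {0,...,s-1} after relabelling. *)
Definition iseg (s : nat) : Ud := [fset i | i in iota 0 s].

Definition isWeight {R : realType} (g : Ud -> R) : Prop := forall u, 0 <= g u.

Definition Delta {R : realType} (v : Ud) (g : Ud -> R) (u : Ud) : R :=
  \sum_(w <- fpowerset v) (-1) ^+ #|` w| * g (u `|` w).

Definition isCM {R : realType} (g : Ud -> R) : Prop :=
  isWeight g /\ forall v u, 0 <= Delta v g u.

Definition inS {R : realType} (C : R) (g : Ud -> R) : Prop :=
  isWeight g /\ (\esum_(v in [set: Ud]) ((C ^+ (2 * #|` v|) * g v)%:E) < +oo)%E.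

(* T^up_{d,C} : (T^up g)_u = sum_{v supseteq u} C^{2|v|} g_v  (finite on S_{d,C}) *)
Definition Tup {R : realType} (C : R) (g : Ud -> R) (u : Ud) : R :=
  fine (\esum_(v in [set v : Ud | (u `<=` v)%fset]) ((C ^+ (2 * #|` v|) * g v)%:E)).

Definition Tdown {R : realType} (C : R) (g : Ud -> R) (u : Ud) : R :=
  C ^- (2 * #|` u|) * limn (fun s : nat => Delta (iseg s `\` u) g u).

(* Main.v *)
Require Import Defs.
From HB Require Import structures.
From mathcomp Require Import all_boot all_order all_algebra.
From mathcomp Require Import finmap.
From mathcomp Require Import all_classical all_reals all_analysis.
Import Order.TTheory GRing.Theory Num.Theory numFieldNormedType.Exports.
Local Open Scope ring_scope.
Local Open Scope fset_scope.
Lemma mem_iseg s x : (x \in iseg s) = (x < s)%N.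
Proof. by rewrite /iseg; apply/imfsetP/idP => [[y]|xs]; [rewrite /= mem_iota => ? ->|exists x; rewrite //= mem_iota]. Qed.

Lemma big_fpowersetU1 (R : realType) (j : nat) (v : Ud) (F : Ud -> R) :
  j \notin v ->
  \sum_(w <- fpowerset (j |` v)) F w = \sum_(w <- fpowerset v) (F w + F (j |` w)).
Proof.
move=> jv.
rewrite (big_fsetID _ (fun w : Ud => j \in w)) /= addrC big_split /=.
congr (_ + _)%R.
  apply: eq_fbigl => w; rewrite !inE /= !fpowersetE.
  apply/andP/idP => [[/fsubsetP H jw]|/fsubsetP H].
    apply/fsubsetP => x xw; have := H x xw; rewrite !inE; case/orP => // /eqP ex.
    by rewrite -ex xw in jw.
  split; first by apply/fsubsetP => x /H xv; rewrite !inE xv orbT.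
  by apply/negP => /H; rewrite (negPf jv).
rewrite (@eq_fbigl _ _ _ _ _ [fset j |` w | w in fpowerset v] (fun w => F w)).
  rewrite big_imfset //=.
  move=> w1 w2; rewrite !fpowersetE => /fsubsetP h1 /fsubsetP h2 e.
  have j1 : j \notin w1 by apply/negP => /h1; rewrite (negPf jv).
  have j2 : j \notin w2 by apply/negP => /h2; rewrite (negPf jv).
  by rewrite -(fsetU1K j1) -(fsetU1K j2) e.
move=> w; rewrite !inE /= fpowersetE; apply/andP/imfsetP => [[/fsubsetP H jw]|[w' /=]].
  exists (w `\ j); first by rewrite fpowersetE; apply/fsubsetP => x; rewrite !inE => /andP[xj /H]; rewrite !inE (negPf xj).
  by rewrite fsetD1K.
rewrite fpowersetE => /fsubsetP H ->; split; last by rewrite !inE eqxx.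
by apply/fsubsetP => x; rewrite !inE => /orP[->//|/H ->]; rewrite orbT.
Qed.
Lemma Delta_step (R : realType) (g : Ud -> R) j v u : j \notin v ->
  Delta (j |` v) g u = Delta v g u - Delta v g (j |` u).
Proof.
move=> jv; rewrite /Delta big_fpowersetU1 // big_split /=; congr (_ + _)%R.
rewrite -sumrN; apply: eq_big_seq => w; rewrite fpowersetE => /fsubsetP wv.
have jw : j \notin w by apply/negP => /wv; rewrite (negPf jv).
rewrite cardfsU1 jw add1n exprS mulN1r mulNr; congr (- (_ * g _)).
by apply/fsetP => x; rewrite !inE; case: (x == j); case: (x \in u); rewrite ?orbT.
Qed.

Lemma Delta0 (R : realType) (g : Ud -> R) u : Delta fset0 g u = g u.
Proof. by rewrite /Delta fpowerset0 big_seq_fset1 cardfs0 expr0 mul1r fsetU0. Qed.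
Lemma fsetU1_ind (P : Ud -> Prop) : P fset0 ->
  (forall j v, j \notin v -> P v -> P (j |` v)) -> forall v, P v.
Proof.
move=> P0 PS v; move: {2}#|` v| (erefl #|` v|) => n; elim: n v => [|n IH] v hv.
  by move/eqP: hv; rewrite cardfs_eq0 => /eqP ->.
have : v != fset0 by apply/negP => /eqP e; rewrite e cardfs0 in hv.
case/fset0Pn => j jv; rewrite -(fsetD1K jv); apply: PS; first by rewrite !inE eqxx.
by apply: IH; move: hv; rewrite (cardfsD1 j) jv add1n => -[].
Qed.

Lemma Delta_le (R : realType) (g : Ud -> R) : isCM g -> forall v u, Delta v g u <= g u.
Proof.
move=> [g0 gD]; elim/fsetU1_ind => [u|j v jv IH u]; first by rewrite Delta0.
by rewrite Delta_step // lerBlDr (le_trans (IH u)) // lerDl.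
Qed.
Lemma Delta_expand (R : realType) (g : Ud -> R) (B : Ud) : forall A u,
  (forall x, x \in A -> x \notin B) ->
  Delta A g u = \sum_(w <- fpowerset B) Delta (A `|` (B `\` w)) g (u `|` w).
Proof.
elim/fsetU1_ind: B => [A u _|j B jB IH A u dAB].
  by rewrite fpowerset0 big_seq_fset1 fsetD0 !fsetU0.
have dAB' : forall x, x \in A -> x \notin B.
  by move=> x /dAB; rewrite !inE negb_or => /andP[].
have jA : j \notin A by apply/negP => /dAB; rewrite !inE eqxx.
rewrite big_fpowersetU1 // (IH A u dAB'); apply: eq_big_seq => w.
rewrite fpowersetE => /fsubsetP wB.
have jw : j \notin w by apply/negP => /wB; rewrite (negPf jB).
have jAB : j \notin A `|` (B `\` w) by rewrite !inE negb_or jA (negPf jB) andbF.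
have -> : A `|` ((j |` B) `\` w) = j |` (A `|` (B `\` w)).
  apply/fsetP => x; rewrite !inE; case: (eqVneq x j) => [->|_] //=.
  by rewrite (negPf jw) /= orbT.
have -> : A `|` ((j |` B) `\` (j |` w)) = A `|` (B `\` w).
  apply/fsetP => x; rewrite !inE; case: (eqVneq x j) => [->|_] //=.
  by rewrite (negPf jA) (negPf jB) andbF.
have -> : u `|` (j |` w) = j |` (u `|` w).
  by apply/fsetP => x; rewrite !inE; case: (x == j); rewrite ?orbT.
by rewrite Delta_step // subrK.
Qed.
Lemma cvg_sum_seq (R : realType) (I : Type) (r : seq I) (f : I -> nat -> R) (l : I -> R) :
  (forall i, (f i n @[n --> \oo] --> l i)%classic) ->
  ((\sum_(i <- r) f i n) @[n --> \oo] --> \sum_(i <- r) l i)%classic.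
Proof.
move=> fl; elim: r => [|i r IH].
  rewrite big_nil; under eq_cvg do rewrite big_nil; exact: cvg_cst.
rewrite big_cons; under eq_cvg do rewrite big_cons.
exact: cvgD.
Qed.

Section Seqs.
Variables (R : realType) (g : Ud -> R).
Hypothesis gCM : isCM g.

Lemma D_ge0 v u : 0 <= Delta v g u.
Proof. by case: gCM. Qed.

Lemma Dseq_noninc X u : nonincreasing_seq (fun s => Delta (iseg s `\` X) g u).
Proof.
apply/nonincreasing_seqP => s /=.
case sX : (s \in X).
  have -> : iseg s.+1 `\` X = iseg s `\` X.
    apply/fsetP => x; rewrite !(in_fsetD, in_fset1U) !mem_iseg ltnS leq_eqVlt.
    by case: (eqVneq x s) => [->|]; rewrite ?sX ?andbF.
  by [].
have -> : iseg s.+1 `\` X = s |` (iseg s `\` X).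
  apply/fsetP => x; rewrite !(in_fsetD, in_fset1U) !mem_iseg ltnS leq_eqVlt.
  by case: (eqVneq x s) => [->|]; rewrite ?sX.
rewrite Delta_step ?lerBlDr ?lerDl ?D_ge0 //.
by rewrite !(in_fsetD) mem_iseg ltnn andbF.
Qed.

Lemma Dseq_cvg X u : cvgn (fun s => Delta (iseg s `\` X) g u).
Proof.
apply: nonincreasing_is_cvgn; first exact: Dseq_noninc.
by exists 0 => _ [s _ <-]; exact: D_ge0.
Qed.

Lemma Dseq_lim_ge0 X u : 0 <= limn (fun s => Delta (iseg s `\` X) g u).
Proof. by apply: limr_ge; [exact: Dseq_cvg|near=> s; exact: D_ge0]. Unshelve. all: by end_near. Qed.

Lemma Dseq_lim_le X u : limn (fun s => Delta (iseg s `\` X) g u) <= g u.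
Proof. by apply: limr_le; [exact: Dseq_cvg|near=> s; exact: Delta_le]. Unshelve. all: by end_near. Qed.

End Seqs.
Section Lseq.
Variables (R : realType) (g : Ud -> R).
Hypothesis gCM : isCM g.

Lemma Dr_le r s u : Delta (iseg s `\` iseg r) g u <= Delta (iseg s `\` iseg r.+1) g u.
Proof.
case: (ltnP r s) => rs.
  have -> : iseg s `\` iseg r = r |` (iseg s `\` iseg r.+1).
    apply/fsetP => x; rewrite !(in_fsetD, in_fset1U) !mem_iseg.
    case: (ltngtP x r) => xr; rewrite ?ltnS ?(ltnW xr) //=.
    - by rewrite (leqNgt x r) xr.
    - by rewrite xr.
  rewrite Delta_step ?lerBlDr ?lerDl ?D_ge0 //.
  by rewrite !(in_fsetD) !mem_iseg ltnS leqnn.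
have -> // : iseg s `\` iseg r = iseg s `\` iseg r.+1.
apply/fsetP => x; rewrite !(in_fsetD) !mem_iseg.
case: (ltnP x s) => xs; rewrite ?andbF //.
by rewrite (leq_trans xs rs) (leq_trans xs (leqW rs)).
Qed.

Definition Lr u r := limn (fun s => Delta (iseg s `\` iseg r) g u).

Lemma Lr_nondec u : nondecreasing_seq (Lr u).
Proof.
apply/nondecreasing_seqP => r; rewrite /Lr.
apply: ler_lim; [exact: Dseq_cvg|exact: Dseq_cvg|].
by near=> s; exact: Dr_le.
Unshelve. all: by end_near. Qed.

Lemma Lr_le u r : Lr u r <= g u.
Proof. exact: Dseq_lim_le. Qed.

Lemma Lr_cvg u : cvgn (Lr u).
Proof.
apply: nondecreasing_is_cvgn; first exact: Lr_nondec.
by exists (g u) => _ [r _ <-]; exact: Lr_le.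
Qed.

Lemma Lr_lim_le u : limn (Lr u) <= g u.
Proof. by apply: limr_le; [exact: Lr_cvg|near=> r; exact: Lr_le]. Unshelve. all: by end_near. Qed.

End Lseq.
Section Ident.
Variables (R : realType) (g : Ud -> R).
Hypothesis gCM : isCM g.

Definition aa v := limn (fun s => Delta (iseg s `\` v) g v).

Lemma Lr_sum u r : u `<=` iseg r ->
  @Lr R g u r = \sum_(w <- fpowerset (iseg r `\` u)) aa (u `|` w).
Proof.
move=> /fsubsetP ur; rewrite /Lr; apply: cvg_lim => //.
apply: cvg_trans; last first.
  apply: (@cvg_sum_seq R _ _ (fun w s => Delta (iseg s `\` (u `|` w)) g (u `|` w)) (fun w => aa (u `|` w))).
  by move=> w; exact: Dseq_cvg.
apply: near_eq_cvg; near=> s.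
have rs : (r <= s)%N by near: s; exact: nbhs_infty_ge.
rewrite (@Delta_expand R g (iseg r `\` u)); last first.
  by move=> x; rewrite !in_fsetD !mem_iseg => /andP[/negPf -> _]; rewrite andbF.
apply: eq_big_seq => w; rewrite fpowersetE => /fsubsetP wB; congr Delta.
apply/fsetP => x; rewrite !(in_fsetD, in_fsetU) !mem_iseg.
case: (ltnP x r) => xr /=.
  by rewrite (leq_trans xr rs); case: (x \in u); case: (x \in w).
have xu : x \notin u by apply/negP => /ur; rewrite mem_iseg ltnNge xr.
have xw : x \notin w by apply/negP => /wB; rewrite in_fsetD mem_iseg ltnNge xr andbF.
by rewrite (negPf xu) (negPf xw) /= orbF.
Unshelve. all: by end_near. Qed.

End Ident.
Lemma bound_nat (s : seq nat) : exists r, forall x, x \in s -> (x < r)%N.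
Proof.
elim: s => [|y s [r IH]]; first by exists 0%N.
exists (maxn y.+1 r) => x; rewrite inE => /orP[/eqP ->|/IH xr].
  by rewrite leq_max leqnn.
by rewrite leq_max xr orbT.
Qed.

Lemma bound_fsets (X : seq Ud) : exists r, forall w, w \in X -> w `<=` iseg r.
Proof.
elim: X => [|y X [r IH]]; first by exists 0%N.
have [r' Hr'] := bound_nat y.
exists (maxn r r') => w; rewrite inE => /orP[/eqP ->|/IH /fsubsetP wr];
  apply/fsubsetP => x; rewrite mem_iseg.
  by move=> /Hr' xr; rewrite leq_max xr orbT.
by move=> /wr; rewrite mem_iseg leq_max => ->.
Qed.

Section Esum.
Variables (R : realType) (g : Ud -> R).
Hypothesis gCM : isCM g.
Local Open Scope ereal_scope.

Let Q (u : Ud) := [set w : Ud | forall x, x \in w -> x \notin u]%classic.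

Lemma aa_ge0 v : (0 <= @aa R g v)%R.
Proof. exact: (@Dseq_lim_ge0 R g gCM). Qed.

Lemma esumQ u : \esum_(w in Q u) (@aa R g (u `|` w))%:E = (limn (@Lr R g u))%:E.
Proof.
have powQ r : forall w, w \in fpowerset (iseg r `\` u) -> Q u w.
  by move=> w; rewrite fpowersetE => /fsubsetP wB x /wB; rewrite in_fsetD => /andP[].
have Lsum r : u `<=` iseg r -> (@Lr R g u r)%:E =
    \sum_(w \in [set` (fpowerset (iseg r `\` u))%fset]%classic) (@aa R g (u `|` w))%:E.
  by move=> ur; rewrite -fsbig_seq ?fset_uniq // sumEFin (@Lr_sum R g gCM u r ur).
have [r0 r0u] := bound_fsets [:: u].
have ur0 : u `<=` iseg r0 by apply: r0u; rewrite inE eqxx.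
have le1 : \esum_(w in Q u) (@aa R g (u `|` w))%:E <= (limn (@Lr R g u))%:E.
  apply: ge_ereal_sup => _ [A [finA AQ] <-].
  have [X AX] := finite_fsetP.1 finA.
  have [r rX] := bound_fsets (u :: X).
  have ur : u `<=` iseg r by apply: rX; rewrite inE eqxx.
  apply: (@le_trans _ _ (@Lr R g u r)%:E); last first.
    by rewrite lee_fin; apply: nondecreasing_cvgn_le; [exact: (@Lr_nondec R g gCM u)|exact: (@Lr_cvg R g gCM u)].
  rewrite (Lsum r ur) AX; apply: lee_fsum_nneg_subset; try exact: finite_fset.
    move=> w; rewrite !inE /= => wX; have {}wX : w \in X := wX; rewrite fpowersetE; apply/fsubsetP => x xw.
    have wuX : w \in u :: X by rewrite inE wX orbT.
    have /fsubsetP/(_ x xw) xr := rX w wuX.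
    have := AQ w; rewrite AX /= => /(_ wX) /(_ x xw) xu.
    by rewrite in_fsetD xu xr.
  by move=> w _; rewrite lee_fin; exact: aa_ge0.
have le2 r : (r0 <= r)%N -> (@Lr R g u r)%:E <= \esum_(w in Q u) (@aa R g (u `|` w))%:E.
  move=> rr; have ur : u `<=` iseg r.
    apply/fsubsetP => x /(fsubsetP ur0); rewrite !mem_iseg => xr.
    exact: leq_trans xr rr.
  rewrite (Lsum r ur); apply: ereal_sup_ubound; exists [set` (fpowerset (iseg r `\` u))%fset]%classic => //.
  by split; [exact: finite_fset|move=> w /= /powQ].
apply/le_anti; rewrite le1 /=.
have e0 : 0 <= \esum_(w in Q u) (@aa R g (u `|` w))%:E.
  by apply: esum_ge0 => w _; rewrite lee_fin; exact: aa_ge0.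
have fin : \esum_(w in Q u) (@aa R g (u `|` w))%:E \is a fin_num.
  by rewrite ge0_fin_numE // (le_lt_trans le1) // ltry.
rewrite -(fineK fin) lee_fin; apply: limr_le; first exact: (@Lr_cvg R g gCM u).
near=> r; rewrite -lee_fin fineK //; apply: le2; near: r; exact: nbhs_infty_ge.
Unshelve. all: by end_near. Qed.

End Esum.
Lemma esum_key (R : realType) (C : R) (g : Ud -> R) u : 0 < C -> isCM g ->
  (\esum_(v in [set v : Ud | (u `<=` v)%fset]) ((C ^+ (2 * #|` v|) * Tdown C g v)%:E))%E
  = (limn (@Lr R g u))%:E.
Proof.
move=> C0 gCM.
have -> : [set v : Ud | (u `<=` v)%fset]%classic =
    [set (u `|` w)%fset | w in [set w : Ud | forall x, x \in w -> x \notin u]]%classic.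
  apply/seteqP; split => v /=.
    move=> /fsubsetP uv; exists (v `\` u)%fset; first by move=> x; rewrite in_fsetD => /andP[].
    apply/fsetP => x; rewrite in_fsetU in_fsetD.
    by case xu: (x \in u) => //=; rewrite uv.
  by move=> [w _ <-]; apply/fsubsetP => x xu; rewrite in_fsetU xu.
rewrite esum_image; last first.
  rewrite /set_inj => w1 w2; rewrite !inE /= => H1 H2 e; apply/fsetP => x.
  have := congr1 (fun S => x \in S) e; rewrite /= !in_fsetU.
  case xu: (x \in u) => //= _.
  have n1 : (x \in w1) = false by apply/negP => /H1; rewrite xu.
  have n2 : (x \in w2) = false by apply/negP => /H2; rewrite xu.
  by rewrite n1 n2.
rewrite -(@esumQ R g gCM u); apply: eq_esum => w _; congr (_%:E).
by rewrite /Tdown mulVKf // expf_neq0 // lt0r_neq0.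
Qed.

Theorem mainTheorem3 (R : realType) (C : R) (g : Ud -> R) :
  0 < C -> isCM g ->
  inS C (Tdown C g) /\
  forall u : Ud,
    (forall r : nat, cvgn (fun s : nat => Delta (iseg s `\` iseg r) g u)) /\
    cvgn (fun r : nat => limn (fun s : nat => Delta (iseg s `\` iseg r) g u)) /\
    Tup C (Tdown C g) u =
      limn (fun r : nat => limn (fun s : nat => Delta (iseg s `\` iseg r) g u)) /\
    limn (fun r : nat => limn (fun s : nat => Delta (iseg s `\` iseg r) g u)) <= g u.
Proof.
move=> C0 gCM; split.
  split.
    move=> v; rewrite /Tdown; apply: mulr_ge0; last exact: (@Dseq_lim_ge0 R g gCM).
    by rewrite invr_ge0 exprn_ge0 // ltW.
  have -> : [set: Ud]%classic = [set v : Ud | (fset0 `<=` v)%fset]%classic.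
    by apply/seteqP; split => v //= _; exact: fsub0set.
  by rewrite (@esum_key R C g fset0 C0 gCM) ltry.
move=> u; split; first by move=> r; exact: (@Dseq_cvg R g gCM).
split; first exact: (@Lr_cvg R g gCM u).
split; last exact: (@Lr_lim_le R g gCM u).
by rewrite /Tup (@esum_key R C g u C0 gCM).
Qed.
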